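(* Under the standing assumptions (A1)–(A5), the function $Iu$ is continuous on $\mathbb{R}^n$, where $u$ is the value function and $I\varphi(x)=\int_{\mathbb{R}^l}[\varphi(x+j(x,z))-\varphi(x)]\,\nu(dz)$.
   Context: Let $(\Omega,\mathcal F,(\mathcal F_t)_{t\ge0},\mathbb P)$ be a complete filtered probability space satisfying the usual conditions, carrying an $m$-dimensional Brownian motion $W$ and an independent Poisson random measure $N$ on $[0,\infty)\times\mathbb{R}^l$ with Lévy measure $\nu(\cdot)=\mathbb E N(1,\cdot)$ (possibly infinite), and compensated measure $\widetilde N(dt,dz)=N(dt,dz)-\nu(dz)dt$; the filtration is generated by $W$ and $N$. Given $\mu:\mathbb{R}^n\to\mathbb{R}^n$, $\sigma:\mathbb{R}^n\to\mathbb{R}^{n\times m}$, $j:\mathbb{R}^n\times\mathbb{R}^l\to\mathbb{R}^n$, $f:\mathbb{R}^n\to[0,\infty)$, $B:\mathbb{R}^n\to\mathbb{R}$ and $r>0$, the standing assumptions are: (A1) there are constants $C_\mu,C_\sigma>0$ and a positive function $C_j\in L^1\cap L^2(\mathbb{R}^l,\nu)$ with $|\mu(x)-\mu(y)|\le C_\mu|x-y|$, $\|\sigma(x)-\sigma(y)\|\le C_\sigma|x-y|$, $|j(x,z)-j(y,z)|\le C_j(z)|x-y|$ for all $x,y\in\mathbb{R}^n$, $z\in\mathbb{R}^l$; and $j(x,\cdot)\in L^1(\mathbb{R}^l;\nu)$ for every $x$. (A2) with $A(x)=(a_{ij}(x))=\frac12\sigma(x)\sigma(x)^{T}$, there is $\lambda>0$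 with $a_{ij}(x)\xi_i\xi_j\ge\lambda|\xi|^2$ for all $x,\xi$. (A3) $f\ge0$ and $|f(x)-f(y)|\le C_f|x-y|$ for some constant $C_f>0$. (A4) $\inf_{\xi}B(\xi)=K>0$, $B\in C(\mathbb{R}^n\setminus\{0\})$, $|B(\xi)|\to\infty$ as $|\xi|\to\infty$, and $B(\xi_1)+B(\xi_2)\ge B(\xi_1+\xi_2)+K$ for all $\xi_1,\xi_2$. (A5) $r>2C_\mu+C_\sigma^2+\int_{\mathbb{R}^l}C_j^2(z)\nu(dz)$. An admissible impulse control $V=(\tau_1,\xi_1;\tau_2,\xi_2;\dots)$ consists of stopping times $0<\tau_1<\tau_2<\cdots$ with $\tau_i\to\infty$ a.s. and $\mathcal F_{\tau_i}$-measurable $\mathbb{R}^n$-valued $\xi_i$. The controlled state satisfies $X(0)=x$, $dX(t)=\mu(X(t^-))dt+\sigma(X(t^-))dW(t)+\int j(X(t^-),z)\widetilde N(dt,dz)+\sum_i\delta(t-\tau_i)\xi_i$. The cost is $J_x[V]=\mathbb E_x\big(\int_0^\infty e^{-rt}f(X(t))dt+\sum_{i}e^{-r\tau_i}B(\xi_i)\big)$ and the value function is $u(x)=\inf_V J_x[V]$. The operator $I$ is defined on Lipschitz functions $\varphi$ by the formula in the claim ($u$ is Lipschitz). *)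

(* Defs.v *)
From HB Require Import structures.
From mathcomp Require Import all_boot all_order all_algebra.
From mathcomp Require Import all_classical all_reals all_analysis.
Set Implicit Arguments. Unset Strict Implicit. Unset Printing Implicit Defensive.
Import Order.TTheory GRing.Theory Num.Theory.
Import numFieldNormedType.Exports.
Local Open Scope classical_set_scope.
Local Open Scope ring_scope.

Definition enorm (R : realType) (n : nat) (x : 'rV[R]_n) : R :=
  Num.sqrt (\sum_(i < n) x ord0 i ^+ 2).

Definition frob (R : realType) (n m : nat) (s : 'M[R]_(n, m)) : R :=
  Num.sqrt (\sum_(i < n) \sum_(k < m) s i k ^+ 2).

Definition mark (R : realType) (l : nat) :=
  g_sigma_algebraType (@open 'rV[R]_l).

Definition levy_measure (R : realType) (l : nat)
    (nu : {measure set (mark R l) -> \bar R}) : Prop :=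
  nu [set (0 : 'rV[R]_l)] = 0%E /\
  (\int[nu]_(z in [set: mark R l])
      (Num.min 1 (enorm (z : 'rV[R]_l) ^+ 2))%:E < +oo)%E.

Definition Iop (R : realType) (n l : nat)
    (nu : {measure set (mark R l) -> \bar R})
    (j : 'rV[R]_n -> mark R l -> 'rV[R]_n) (phi : 'rV[R]_n -> R)
    (x : 'rV[R]_n) : R :=
  Rintegral nu [set: mark R l] (fun z => phi (x + j x z) - phi x).

(* Main.v *)
Require Import Defs.
From HB Require Import structures.
From mathcomp Require Import all_boot all_order all_algebra.
From mathcomp Require Import all_classical all_reals all_analysis.
From mathcomp Require Import lra ring measurable_realfun.
Import Order.TTheory GRing.Theory Num.Theory.
Import numFieldNormedType.Exports.
Local Open Scope classical_set_scope.
Local Open Scope ring_scope.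

Module Helpers.
Set Implicit Arguments. Unset Strict Implicit.
Definition L1 (R : realType) (n : nat) (v : 'rV[R]_n) : R :=
  \sum_(i < n) `|v ord0 i|.

Lemma L1_ge0 (R : realType) n (v : 'rV[R]_n) : 0 <= L1 v.
Proof. by apply: sumr_ge0 => i _. Qed.

Lemma L1D (R : realType) n (v w : 'rV[R]_n) : L1 (v + w) <= L1 v + L1 w.
Proof.
rewrite /L1 -big_split /=; apply: ler_sum => i _; rewrite mxE; exact: ler_normD.
Qed.

Lemma L1N (R : realType) n (v : 'rV[R]_n) : L1 (- v) = L1 v.
Proof. by apply: eq_bigr => i _; rewrite mxE normrN. Qed.

Lemma coord_le_enorm (R : realType) n (v : 'rV[R]_n) i : `|v ord0 i| <= enorm v.
Proof.
rewrite /enorm -sqrtr_sqr; apply: ler_wsqrtr.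
rewrite (bigD1 i) //= lerDl; apply: sumr_ge0 => k _; exact: sqr_ge0.
Qed.

Lemma enorm_ge0 (R : realType) n (v : 'rV[R]_n) : 0 <= enorm v.
Proof. exact: sqrtr_ge0. Qed.

Lemma enorm_le_L1 (R : realType) n (v : 'rV[R]_n) : enorm v <= L1 v.
Proof.
rewrite /enorm -[L1 v]ger0_norm ?L1_ge0 // -sqrtr_sqr; apply: ler_wsqrtr.
rewrite expr2 /L1 mulr_suml; apply: ler_sum => i _.
rewrite -real_normK ?num_real // expr2; apply: ler_wpM2l => //.
by rewrite (bigD1 i) //= lerDl; apply: sumr_ge0.
Qed.

Lemma L1_le_enorm (R : realType) n (v : 'rV[R]_n) : L1 v <= n%:R * enorm v.
Proof.
rewrite /L1 (le_trans (ler_sum _ (fun i _ => coord_le_enorm v i))) //.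
by rewrite sumr_const card_ord mulr_natl.
Qed.

Lemma lip_meas d (T : measurableType d) (R : realType) n (h : T -> 'rV[R]_n)
  (F : 'rV[R]_n -> R) (C : R) :
  0 <= C -> (forall i, measurable_fun setT (fun t => h t ord0 i)) ->
  (forall a b, `|F a - F b| <= C * L1 (a - b)) ->
  measurable_fun setT (F \o h).
Proof.
move=> C0 mh FL.
apply: (measurability _ (measurable_realfun.RGenOpens.measurableE R)).
move=> _ [_ [a [b ->]] <-].
pose box (p : nat * {ffun 'I_n -> int}) (v : 'rV[R]_n) :=
  forall i, (p.2 i)%:~R <= p.1.+1%:R * v ord0 i < (p.2 i + 1)%:~R.
have -> : setT `&` (F \o h) @^-1` `]a, b[ =
   \bigcup_(p : nat * {ffun 'I_n -> int})
      [set t | (forall v, box p v -> a < F v < b) /\ box p (h t)].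
  apply/seteqP; split => [t [_ /=]|t [p _ [Pp bp]]]; last first.
    by split => //=; rewrite in_itv /=; exact: Pp _ bp.
  rewrite in_itv /= => /andP[aF Fb].
  set v := h t.
  set e := Num.min (F v - a) (b - F v).
  have e0 : 0 < e by rewrite lt_min !subr_gt0 aF Fb.
  have [ea eb] : e <= F v - a /\ e <= b - F v.
    by have := le_refl e; rewrite {2}/e le_min => /andP[].
  pose k := Num.trunc ((C * n%:R) / e).
  have hk : C * n%:R / e < k.+1%:R := truncnS_gt _.
  have k0 : 0 < k.+1%:R :> R by rewrite ltr0n.
  exists (k, [ffun i => Num.floor (k.+1%:R * v ord0 i)]) => //; split; last first.
    by move=> i /=; rewrite ffunE floor_le floorD1_gt.
  move=> w bw.
  have Hd : `|F w - F v| < e.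
    apply: (le_lt_trans (FL w v)).
    apply: (@le_lt_trans _ _ (C * (n%:R * k.+1%:R^-1))).
      apply: ler_wpM2l => //.
      apply: (@le_trans _ _ (\sum_(i < n) k.+1%:R^-1)); last first.
        by rewrite sumr_const card_ord mulr_natl.
      apply: ler_sum => i _.
      have := bw i; rewrite /= ffunE => /andP[w1 w2].
      have v1 := floor_le (k.+1%:R * v ord0 i).
      have v2 := floorD1_gt (k.+1%:R * v ord0 i).
      rewrite intrD (_ : 1%:~R = 1) // in w2 v2.
      rewrite -[k.+1%:R^-1]mulr1 ler_pdivlMl //.
      rewrite -[X in X * _](gtr0_norm k0) -normrM !mxE mulrBr.
      rewrite ler_norml; move: w1 w2 v1 v2.
      set X := _ * w ord0 i; set Y := _ * v ord0 i; set Q := (Num.floor Y)%:~R.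
      move=> w1p w2p v1p v2p; clearbody X Y Q; clear -w1p w2p v1p v2p; apply/andP; split; lra.
    rewrite mulrA ltr_pdivrMr //.
    by move: hk; rewrite ltr_pdivrMr // [e * _]mulrC.
  move: Hd; rewrite ltr_norml => /andP[H1 H2].
  apply/andP; split; lra.
apply: countable_bigcupT_measurable; first exact: countableP.
move=> p /=; case: (pselect (forall v, box p v -> a < F v < b)) => P; last first.
  rewrite (_ : [set t | _] = set0) //.
  by apply/seteqP; split => z //= [/P].
have E : [set t | (forall v, box p v -> a < F v < b) /\ box p (h t)] =
  ~` \bigcup_(i : 'I_n) ~` (setT `&` (fun t => p.1.+1%:R * h t ord0 i) @^-1`
       `[(p.2 i)%:~R, (p.2 i + 1)%:~R[).
  apply/seteqP; split => z /=.
    move=> [_ bx] [i _]; apply; split => //=; rewrite in_itv /=; exact: bx.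
  move=> H; split; first exact: P.
  move=> i; apply: contrapT => Hn; apply: H; exists i => //.
  by move=> [_ /=]; rewrite in_itv /=.
rewrite E.
apply: measurableC; apply: countable_bigcupT_measurable; first exact: countableP.
move=> i; apply: measurableC.
apply: (measurable_realfun.measurable_funM (measurable_cst _) (mh i)) => //.
Qed.

End Helpers.
Import Helpers.

Theorem lemma3p2 (R : realType) (n m l : nat)
  (mu : 'rV[R]_n -> 'rV[R]_n) (sigma : 'rV[R]_n -> 'M[R]_(n, m))
  (j : 'rV[R]_n -> mark R l -> 'rV[R]_n) (f : 'rV[R]_n -> R)
  (B : 'rV[R]_n -> R) (r : R)
  (nu : {measure set (mark R l) -> \bar R})
  (u : 'rV[R]_n -> R) :
  levy_measure nu ->
  (* (A1) *)
  forall (Cmu Csig : R) (Cj : mark R l -> R),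
  0 < Cmu -> 0 < Csig -> (forall z, 0 < Cj z) ->
  nu.-integrable [set: mark R l] (fun z => (Cj z)%:E) ->
  nu.-integrable [set: mark R l] (fun z => (Cj z ^+ 2)%:E) ->
  (forall x y, enorm (mu x - mu y) <= Cmu * enorm (x - y)) ->
  (forall x y, frob (sigma x - sigma y) <= Csig * enorm (x - y)) ->
  (forall x y z, enorm (j x z - j y z) <= Cj z * enorm (x - y)) ->
  (forall x (i : 'I_n), nu.-integrable [set: mark R l] (fun z => (j x z ord0 i)%:E)) ->
  (* (A2) *)
  forall lambda : R, 0 < lambda ->
  (forall x xi : 'rV[R]_n,
     \sum_(i < n) \sum_(k < n)
        ((2%:R)^-1 * (sigma x *m (sigma x)^T) i k) * xi ord0 i * xi ord0 k
     >= lambda * enorm xi ^+ 2) ->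
  (* (A3) *)
  forall Cf : R, 0 < Cf ->
  (forall x, 0 <= f x) ->
  (forall x y, `|f x - f y| <= Cf * enorm (x - y)) ->
  (* (A4) *)
  forall K : R, 0 < K ->
  (forall xi, K <= B xi) ->
  (forall e : R, 0 < e -> exists xi, B xi < K + e) ->
  {within ~` [set (0 : 'rV[R]_n)], continuous B} ->
  (forall M : R, exists R0 : R, forall xi, R0 < enorm xi -> M < `|B xi|) ->
  (forall xi1 xi2, B xi1 + B xi2 >= B (xi1 + xi2) + K) ->
  (* (A5) *)
  2%:R * Cmu + Csig ^+ 2 + Rintegral nu [set: mark R l] (fun z => Cj z ^+ 2) < r ->
  (* the value function u is Lipschitz *)
  forall Cu : R, (forall x y, `|u x - u y| <= Cu * enorm (x - y)) ->
  continuous (Iop nu j u).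
Proof.
move=> _ Cmu Csig Cj _ _ Cj0 iCj _ _ _ Lj ijx lambda _ _ Cf _ _ _ K _ _ _ _ _ _ _ Cu Lu.
set c := `|Cu|.
have c0 : 0 <= c by exact: normr_ge0.
have Lu' : forall a b, `|u a - u b| <= c * L1 (a - b).
  move=> a b; apply: le_trans (Lu a b) _.
  apply: (@le_trans _ _ (c * enorm (a - b))).
    by apply: ler_wpM2r; [exact: enorm_ge0|exact: ler_norm].
  by apply: ler_wpM2l => //; exact: enorm_le_L1.
have Lj' : forall x y z, L1 (j x z - j y z) <= n%:R * Cj z * L1 (x - y).
  move=> x y z; apply: le_trans (L1_le_enorm _) _.
  rewrite -mulrA; apply: ler_wpM2l => //.
  apply: le_trans (Lj x y z) _; apply: ler_wpM2l; first exact: ltW.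
  exact: enorm_le_L1.
have mj : forall x i, measurable_fun setT (fun z => j x z ord0 i).
  by move=> x i; apply/measurable_realfun.measurable_EFinP; exact: measurable_int (ijx x i).
have mCj : measurable_fun setT Cj.
  by apply/measurable_realfun.measurable_EFinP; exact: measurable_int iCj.
pose g y z := u (y + j y z) - u y.
have mg : forall y, measurable_fun setT (g y).
  move=> y; apply: measurable_realfun.measurable_funB; last exact: measurable_cst.
  apply: (@lip_meas _ _ _ _ (fun z => y + j y z) u c c0) => // i.
  have -> : (fun t => (y + j y t) ord0 i) = (fun t => y ord0 i + j y t ord0 i).
    by apply: funext => t; rewrite mxE.
  exact: measurable_realfun.measurable_funD (measurable_cst _) (mj y i).
have iN : forall y, nu.-integrable setT (EFin \o (fun z => L1 (j y z))).
  move=> y.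
  have -> : (EFin \o fun z => L1 (j y z)) = (fun z => \sum_(i < n) (`|j y z ord0 i|)%:E)%E.
    by apply: funext => z; rewrite /= sumEFin.
  by apply: (integrable_sum measurableT) => i _; exact: integrable_norm (ijx y i).
have ig : forall y, nu.-integrable setT (EFin \o g y).
  move=> y; apply: (le_integrable measurableT _ _ (integrableZl measurableT c (iN y))).
    exact/measurable_realfun.measurable_EFinP.
  move=> z _; rewrite /= lee_fin.
  rewrite (ger0_norm (mulr_ge0 c0 (L1_ge0 _))).
  apply: le_trans (Lu' _ _) _.
  by rewrite addrAC subrr add0r.
move=> x; apply: (proj2 (@cvgrPdist_lt _ _ _ (nbhs x) _ (Iop nu j u) (Iop nu j u x))) => eps eps0.
pose N z := L1 (j x z).
pose G z := c * (2 * N z + n%:R * Cj z).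
pose cc z := c * (2 + n%:R * Cj z).
pose fk (k : nat) z := Num.min (G z) (cc z * k.+1%:R^-1).
have N0 z : 0 <= N z by exact: L1_ge0.
have Q0 z : 0 <= n%:R * Cj z by apply: mulr_ge0 => //; exact: ltW.
have G0 z : 0 <= G z by apply: mulr_ge0 => //; apply: addr_ge0 => //; apply: mulr_ge0.
have cc0 z : 0 <= cc z by apply: mulr_ge0 => //; apply: addr_ge0.
have fk0 k z : 0 <= fk k z.
  by rewrite /fk le_min G0 /= mulr_ge0 // invr_ge0.
have iG : nu.-integrable setT (EFin \o G).
  apply: (eq_integrable measurableT _ _ _ (integrableZl measurableT c
     (integrableD measurableT (integrableZl measurableT 2 (iN x))
                             (integrableZl measurableT n%:R iCj)))).
  by move=> z _; rewrite /G /= (EFinM c) (EFinD (2 * N z)) (EFinM 2) (EFinM n%:R). 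
have mG : measurable_fun setT G.
  by apply/measurable_realfun.measurable_EFinP; exact: measurable_int iG.
have mcc : measurable_fun setT cc.
  apply: measurable_realfun.measurable_funM; first exact: measurable_cst.
  apply: measurable_realfun.measurable_funD; first exact: measurable_cst.
  by apply: measurable_realfun.measurable_funM => //; exact: measurable_cst.
have mfk k : measurable_fun setT (fk k).
  apply: measurable_realfun.measurable_minr => //.
  by apply: measurable_realfun.measurable_funM => //; exact: measurable_cst.
have ifk k : nu.-integrable setT (EFin \o fk k).
  apply: (le_integrable measurableT _ _ iG).
    exact/measurable_realfun.measurable_EFinP.
  move=> z _; rewrite /= lee_fin ger0_norm // ger0_norm //.
  by rewrite /fk ge_min lexx.
have mfkE k : measurable_fun [set: mark R l] (EFin \o fk k).
  exact/measurable_realfun.measurable_EFinP.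
have cvgI : Rintegral nu setT (fk k) @[k --> \oo] --> 0.
  have H := @dominated_cvg _ _ _ nu setT measurableT (fun k => EFin \o fk k)
    (cst 0%E) (EFin \o G) mfkE.
  have := H _ (fun z _ => erefl) iG.
  rewrite integral0 => /(_ _ _)/fine_cvg; apply.
  - move=> z _ /=; apply: cvg_EFin; first exact: nearW.
    apply: (@squeeze_cvgr _ _ _ _ (fun=> 0) (fun k => cc z * k.+1%:R^-1)).
    + by apply: nearW => k; rewrite fk0 /fk ge_min lexx orbT.
    + exact: cvg_cst.
    + rewrite -(mulr0 (cc z)); apply: cvgM; first exact: cvg_cst.
      exact: cvg_harmonic.
  - move=> k z _ /=; rewrite lee_fin ger0_norm //.
    by rewrite /fk ge_min lexx.
have [K0 _ HK] := cvgr_lt 0 cvgI eps eps0.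
set k := K0.
have Hk : Rintegral nu setT (fk k) < eps := HK K0 (leqnn K0).
have hc : forall i, nbhs x (fun y : 'rV[R]_n => `|x ord0 i - y ord0 i| < k.+1%:R^-1 / n.+1%:R).
  move=> i; have := @coord_continuous R 1 n ord0 i x.
  move/(proj1 (@cvgrPdist_lt _ _ _ (nbhs x) _ _ _)); apply.
  by rewrite divr_gt0 // invr_gt0 ltr0n.
apply: filterS (@filter_forall _ 'I_n _ (nbhs x) _ hc) => y hy.
set e' := L1 (y - x).
have he : e' <= k.+1%:R^-1.
  apply: (@le_trans _ _ (\sum_(i < n) (k.+1%:R^-1 / n.+1%:R))).
    by apply: ler_sum => i _; rewrite !mxE distrC; exact: ltW (hy i).
  rewrite sumr_const card_ord -[_ *+ n]mulr_natr -mulrA ler_piMr ?invr_ge0 ?ler0n //.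
  by rewrite ler_pdivrMl ?ltr0n // mulr1 ler_nat.
have he1 : e' <= 1.
  by apply: le_trans he _; rewrite invr_le1 ?ler1n ?ltr0n // unitfE pnatr_eq0.
have e'0 : 0 <= e' by exact: L1_ge0.
have iB : nu.-integrable setT (EFin \o (fun z => g y z - g x z)).
  apply: (eq_integrable measurableT _ _ _ (integrableB measurableT (ig y) (ig x))).
  by move=> z _; rewrite /= EFinB.
have E : Iop nu j u y - Iop nu j u x = Rintegral nu setT (fun z => g y z - g x z).
  by rewrite RintegralB.
rewrite distrC E; apply: le_lt_trans Hk.
apply: le_trans (le_normr_Rintegral measurableT iB) _.
apply: (le_Rintegral measurableT (integrable_norm iB) (ifk k)) => z _.
set Q := n%:R * Cj z.
have hL1 : L1 (j y z) <= N z + Q * e'.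
  have -> : j y z = j x z + (j y z - j x z) by rewrite addrC subrK.
  by apply: le_trans (L1D _ _) _; rewrite lerD2l; exact: Lj'.
have hgy : `|g y z| <= c * L1 (j y z).
  by apply: le_trans (Lu' _ _) _; rewrite addrAC subrr add0r.
have hgx : `|g x z| <= c * N z.
  by apply: le_trans (Lu' _ _) _; rewrite addrAC subrr add0r.
have hdiff : `|u (y + j y z) - u (x + j x z)| <= c * (e' + Q * e').
  apply: le_trans (Lu' _ _) _; apply: ler_wpM2l => //.
  rewrite (_ : y + j y z - (x + j x z) = (y - x) + (j y z - j x z)).
    by apply: le_trans (L1D _ _) _; rewrite lerD2l; exact: Lj'.
  by rewrite opprD addrACA.
have hux : `|u y - u x| <= c * e' by exact: Lu'.
rewrite /fk le_min; apply/andP; split.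
  apply: le_trans (ler_normB _ _) _; apply: le_trans (lerD hgy hgx) _.
  have hQ : Q * e' <= Q by apply: ler_piMr; [exact: Q0|].
  rewrite /G -/Q -mulrDr; apply: ler_wpM2l => //.
  apply: le_trans (lerD hL1 (lexx (N z))) _.
  move: hQ; set P := Q * e'; clearbody P Q; move=> hQ; lra.
rewrite /= (_ : g y z - g x z = (u (y + j y z) - u (x + j x z)) - (u y - u x)); last first.
  by rewrite /g; ring.
apply: le_trans (ler_normB _ _) _; apply: le_trans (lerD hdiff hux) _.
rewrite (_ : c * (e' + Q * e') + c * e' = cc z * e'); last by rewrite /cc /Q; ring.
by apply: ler_wpM2l.
Qed.
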